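(* Let $n\ge 4$, $s_k=\sin(k\pi/n)$, and let $D_1,\dots,D_{n-1}$ be positive numbers satisfying $D_kD_{l-j}\ge D_jD_{l-k}+D_lD_{k-j}$ for all integers $1\le j<k<l\le n-1$, together with $D_1=D_{n-1}=s_1$. Let $a_k=\log(D_k/s_k)$. Then (1) $a_k\ge 0$ for all $k\in\{2,\dots,n-2\}$; (2) if $a_k>0$ for some $k\in\{2,\dots,n-2\}$, then $a_k>0$ for all $k\in\{2,\dots,n-2\}$. *)

(* Defs.v *)
From Stdlib Require Import Reals Lra Lia.
Open Scope R_scope.

Definition s (n k : nat) : R := sin (INR k * PI / INR n).

Definition a (n : nat) (D : nat -> R) (k : nat) : R := ln (D k / s n k).

(* Main.v *)
Require Import Defs.
From Stdlib Require Import Reals Lra Lia.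
Open Scope R_scope.

Lemma argmin_ex (f : nat -> R) (N : nat) : (1 <= N)%nat ->
  exists k, (1 <= k <= N)%nat /\ forall i, (1 <= i <= N)%nat -> f k <= f i.
Proof.
  induction N as [|N IH]; intros HN; [lia|].
  destruct (Nat.eq_dec N 0) as [->|HN0].
  - exists 1%nat; split; [lia|]. intros i Hi. replace i with 1%nat by lia. lra.
  - destruct IH as [k [Hk Hmin]]; [lia|].
    destruct (Rle_dec (f k) (f (S N))) as [Hle|Hle].
    + exists k; split; [lia|]. intros i Hi.
      destruct (Nat.eq_dec i (S N)) as [->|Hne]; [lra|]. apply Hmin; lia.
    + exists (S N); split; [lia|]. intros i Hi.
      destruct (Nat.eq_dec i (S N)) as [->|Hne]; [lra|].
      specialize (Hmin i ltac:(lia)). lra.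
Qed.

Lemma s_pos n i : (1 <= i <= n - 1)%nat -> 0 < s n i.
Proof.
  intros Hi. unfold s. apply sin_gt_0.
  - assert (0 < INR i) by (apply lt_0_INR; lia).
    assert (0 < INR n) by (apply lt_0_INR; lia).
    pose proof PI_RGT_0. apply Rdiv_lt_0_compat; nra.
  - assert (INR i < INR n) by (apply lt_INR; lia).
    assert (0 < INR n) by (apply lt_0_INR; lia).
    pose proof PI_RGT_0. apply (Rmult_lt_reg_r (INR n)); [lra|].
    unfold Rdiv. rewrite Rmult_assoc, Rinv_l by lra. nra.
Qed.

Lemma s_id n k : (1 <= k)%nat ->
  s n k * s n k = s n 1 * s n 1 + s n (k + 1) * s n (k - 1).
Proof.
  intros Hk. unfold s.
  rewrite plus_INR, minus_INR by lia. simpl INR.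
  set (b := 1 * PI / INR n).
  replace ((INR k + 1) * PI / INR n) with (INR k * PI / INR n + b) by (unfold b, Rdiv; ring).
  replace ((INR k - 1) * PI / INR n) with (INR k * PI / INR n - b) by (unfold b, Rdiv; ring).
  set (a := INR k * PI / INR n).
  rewrite sin_plus, sin_minus.
  pose proof (sin2_cos2 a) as Ha. pose proof (sin2_cos2 b) as Hb.
  unfold Rsqr in *. nra.
Qed.

Lemma s_sym n : (1 <= n)%nat -> s n (n - 1) = s n 1.
Proof.
  intros Hn. unfold s. rewrite minus_INR by lia. simpl INR.
  assert (0 < INR n) by (apply lt_0_INR; lia).
  replace ((INR n - 1) * PI / INR n) with (PI - 1 * PI / INR n) by (field; lra).
  apply sin_PI_x.
Qed.

Theorem mainTheorem12 (n : nat) (D : nat -> R)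
  (Hn : (4 <= n)%nat)
  (Hpos : forall k : nat, (1 <= k <= n - 1)%nat -> 0 < D k)
  (Hineq : forall j k l : nat, (1 <= j)%nat -> (j < k)%nat -> (k < l)%nat -> (l <= n - 1)%nat ->
     D k * D (l - j)%nat >= D j * D (l - k)%nat + D l * D (k - j)%nat)
  (H1 : D 1%nat = s n 1)
  (Hn1 : D (n - 1)%nat = s n 1) :
  (forall k : nat, (2 <= k <= n - 2)%nat -> 0 <= a n D k) /\
  ((exists k : nat, (2 <= k <= n - 2)%nat /\ 0 < a n D k) ->
   forall k : nat, (2 <= k <= n - 2)%nat -> 0 < a n D k).
Proof.
  set (r := fun i => D i / s n i).
  assert (Hs1 : 0 < s n 1) by (apply s_pos; lia).
  assert (Hr1 : r 1%nat = 1) by (unfold r; rewrite H1; field; lra).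
  assert (Hrn : r (n-1)%nat = 1) by (unfold r; rewrite Hn1, s_sym by lia; field; lra).
  assert (Hkey : forall k, (2 <= k <= n - 2)%nat ->
            D k * D k >= s n 1 * s n 1 + D (k+1)%nat * D (k-1)%nat).
  { intros k Hk. pose proof (Hineq 1%nat k (k+1)%nat ltac:(lia) ltac:(lia) ltac:(lia) ltac:(lia)) as H.
    replace (k + 1 - 1)%nat with k in H by lia.
    replace (k + 1 - k)%nat with 1%nat in H by lia.
    rewrite H1 in H. lra. }
  assert (HrD : forall i, (1 <= i <= n-1)%nat -> D i = r i * s n i).
  { intros i Hi. pose proof (s_pos n i Hi). unfold r. field. lra. }
  assert (Hrpos : forall i, (1 <= i <= n-1)%nat -> 0 < r i).
  { intros i Hi. unfold r. apply Rdiv_lt_0_compat; [apply Hpos|apply s_pos]; lia. }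
  assert (Ha0 : forall k, (2 <= k <= n-2)%nat -> (0 <= a n D k <-> 1 <= r k)).
  { intros k Hk. unfold a. fold (r k). pose proof (Hrpos k ltac:(lia)) as H0. split; intros HH.
    - destruct (Rlt_le_dec (r k) 1) as [Hl|Hl]; [|lra].
      pose proof (ln_increasing _ _ H0 Hl) as H2. rewrite ln_1 in H2. lra.
    - rewrite <- ln_1. destruct (Req_dec (r k) 1) as [E|E]; [rewrite E; lra|].
      left. apply ln_increasing; lra. }
  assert (Ha1 : forall k, (2 <= k <= n-2)%nat -> (0 < a n D k <-> 1 < r k)).
  { intros k Hk. unfold a. fold (r k). pose proof (Hrpos k ltac:(lia)) as H0. split; intros HH.
    - destruct (Rlt_le_dec 1 (r k)) as [Hl|Hl]; [lra|].
      destruct (Req_dec (r k) 1) as [E|E]; [rewrite E, ln_1 in HH; lra|].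
      assert (H2 : ln (r k) < ln 1) by (apply ln_increasing; lra). rewrite ln_1 in H2. lra.
    - rewrite <- ln_1. apply ln_increasing; lra. }
  assert (P1 : forall i, (1 <= i <= n-1)%nat -> 1 <= r i).
  { destruct (argmin_ex r (n-1)%nat ltac:(lia)) as [k0 [Hk0 Hmin]].
    intros i Hi. destruct (Rlt_le_dec (r k0) 1) as [Hl|Hl].
    2:{ specialize (Hmin i Hi). lra. }
    exfalso.
    assert (k0 <> 1%nat) by (intro E; subst; lra).
    assert (k0 <> n-1)%nat by (intro E; rewrite E in Hl; lra).
    set (mu := r k0).
    assert (Hmu : 0 < mu) by (apply Hrpos; lia).
    pose proof (Hkey k0 ltac:(lia)) as HK.
    pose proof (s_id n k0 ltac:(lia)) as HI.
    assert (Hp : 0 < s n (k0+1)) by (apply s_pos; lia).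
    assert (Hm : 0 < s n (k0-1)) by (apply s_pos; lia).
    assert (Ep : D (k0+1)%nat >= mu * s n (k0+1)).
    { rewrite (HrD (k0+1)%nat) by lia. specialize (Hmin (k0+1)%nat ltac:(lia)). fold mu in Hmin. nra. }
    assert (Em : D (k0-1)%nat >= mu * s n (k0-1)).
    { rewrite (HrD (k0-1)%nat) by lia. specialize (Hmin (k0-1)%nat ltac:(lia)). fold mu in Hmin. nra. }
    rewrite (HrD k0) in HK by lia. fold mu in HK.
    assert (D (k0+1)%nat * D (k0-1)%nat >= mu * s n (k0+1) * (mu * s n (k0-1))).
    { apply Rle_ge. apply Rmult_le_compat; nra. }
    assert (HA : mu * mu * (s n k0 * s n k0) >= s n 1 * s n 1 + mu * mu * (s n (k0+1) * s n (k0-1))).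
    { assert (E1 : mu * s n k0 * (mu * s n k0) = mu * mu * (s n k0 * s n k0)) by ring.
      assert (E2 : mu * s n (k0+1) * (mu * s n (k0-1)) = mu * mu * (s n (k0+1) * s n (k0-1))) by ring.
      lra. }
    replace (s n (k0+1) * s n (k0-1)) with (s n k0 * s n k0 - s n 1 * s n 1) in HA by lra.
    assert (mu * mu * (s n 1 * s n 1) >= s n 1 * s n 1) by lra.
    assert (Hl2 : mu < 1) by exact Hl. clearbody mu. assert (mu * mu < 1) by nra. assert (0 < s n 1 * s n 1) by nra. nra. }
  split.
  { intros k Hk. apply Ha0; [lia|]. apply P1; lia. }
  intros [m [Hm Ham]] k Hk. apply Ha1; [lia|].
  apply Ha1 in Ham; [|lia].
  destruct (Rlt_le_dec 1 (r k)) as [Hl|Hl]; [lra|]. exfalso.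
  assert (Hk1 : r k = 1) by (pose proof (P1 k ltac:(lia)); lra).
  assert (Prop1 : forall k, (2 <= k <= n-2)%nat -> r k = 1 -> r (k+1)%nat = 1 /\ r (k-1)%nat = 1).
  { clear k Hk Hl Hk1. intros k Hk Hrk.
    pose proof (Hkey k Hk) as HK.
    pose proof (s_id n k ltac:(lia)) as HI.
    assert (Hp : 0 < s n (k+1)) by (apply s_pos; lia).
    assert (Hmm : 0 < s n (k-1)) by (apply s_pos; lia).
    pose proof (P1 (k+1)%nat ltac:(lia)). pose proof (P1 (k-1)%nat ltac:(lia)).
    rewrite (HrD k), (HrD (k+1)%nat), (HrD (k-1)%nat) in HK by lia.
    rewrite Hrk in HK.
    set (u := r (k+1)%nat) in *. set (v := r (k-1)%nat) in *.
    clearbody u v.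
    assert (HP : 0 < s n (k+1) * s n (k-1)) by nra.
    assert (E1 : u * s n (k+1) * (v * s n (k-1)) = (u * v) * (s n (k+1) * s n (k-1))) by ring.
    assert (E2 : 1 * s n k * (1 * s n k) = s n k * s n k) by ring.
    assert (Huv : (u * v) * (s n (k+1) * s n (k-1)) <= 1 * (s n (k+1) * s n (k-1))) by lra.
    apply Rmult_le_reg_r in Huv; [|exact HP].
    split; nra. }
  assert (Up : forall t, (k + t <= n-1)%nat -> r (k+t)%nat = 1).
  { induction t; intros Ht. { rewrite Nat.add_0_r. exact Hk1. }
    replace (k + S t)%nat with (k + t + 1)%nat by lia.
    apply (Prop1 (k+t)%nat); [lia|]. apply IHt; lia. }
  assert (Down : forall t, (t <= k-1)%nat -> r (k-t)%nat = 1).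
  { induction t; intros Ht. { rewrite Nat.sub_0_r. exact Hk1. }
    replace (k - S t)%nat with (k - t - 1)%nat by lia.
    apply (Prop1 (k-t)%nat); [lia|]. apply IHt; lia. }
  destruct (Nat.le_gt_cases k m).
  - replace m with (k + (m-k))%nat in Ham by lia. rewrite Up in Ham by lia. lra.
  - replace m with (k - (k-m))%nat in Ham by lia. rewrite Down in Ham by lia. lra.
Qed.
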